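(* Let $Q=(I,\Omega)$ be a quiver, $\alpha\in\mathbb{N}^I$, and let $F^*:0=F^0\subset F^1\subset\cdots\subset F^s=\bigoplus_{i\in I}\mathbb{C}^{\alpha_i}$ be a flag of $I$-graded subspaces. For $\underline{n}\in\mathbb{N}_{\geq 1}^{\Omega}$ and $r\geq 0$ let $S_r^{\underline{n}}\subseteq \mathrm{End}(\alpha)_{F^*}$ and $s_r^{\underline{n}}=\dim S_r^{\underline{n}}$ be as defined in the context. Then there exists $\underline{n_0}\in\mathbb{Z}^{\Omega}$ such that for all $\underline{n}\geq\underline{n_0}$ (componentwise), $$s_0^{\underline{n}}=\max_{r\geq 0}\bigl(s_r^{\underline{n}}-r\bigr).$$
   Context: Write $V_i=\mathbb{C}^{\alpha_i}$ and $F^k_i=F^k\cap V_i$. For $\underline{n}\in\mathbb{N}_{\geq1}^{\Omega}$, $Q_{\underline{n}}$ is the quiver with vertex set $I$ obtained from $Q$ by replacing each arrow $h:i\to j$ by $n_h$ identical arrows $i\to j$. A linear map $f:V_i\to V_j$ is compatible with $F^*$ if $f(F^k_i)\subseteq F^k_j$ for all $k$; $\mathrm{Hom}(V_i,V_j)_{F^*}$ denotes the space of such maps. $\mathrm{Rep}(Q_{\underline{n}},\alpha)_{F^*}$ is the vector space of representations $x=(x_a)$ of $Q_{\underline{n}}$ on $(V_i)_{i\in I}$ with every $x_a$ (for $a:i\to j$) in $\mathrm{Hom}(V_i,V_j)_{F^*}$. $\mathrm{End}(\alpha)_{F^*}$ is the space of tuples $g=(g_i)_{i\in I}$, $g_i\in\mathrm{End}(V_i)$,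 with $g_i(F^k_i)\subseteq F^k_i$ for all $i,k$. For $g\in\mathrm{End}(\alpha)_{F^*}$ let $W_{\underline{n}}(g)=\{x\in \mathrm{Rep}(Q_{\underline{n}},\alpha)_{F^*}: g_jx_a=x_ag_i \text{ for every arrow } a:i\to j\}$ (a linear subspace). Define $S_r^{\underline{n}}=\{g\in\mathrm{End}(\alpha)_{F^*}:\dim W_{\underline{n}}(g)\geq \dim \mathrm{Rep}(Q_{\underline{n}},\alpha)_{F^*}-r\}$ and $s_r^{\underline{n}}=\dim S_r^{\underline{n}}$. For $\underline{m},\underline{n}\in\mathbb{Z}^\Omega$, $\underline{n}\geq\underline{m}$ means $n_h\geq m_h$ for all $h\in\Omega$. *)

(* Defs.v *)
From HB Require Import structures.
From mathcomp Require Import all_boot all_order all_algebra.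
From mathcomp Require Import complex.
From mathcomp Require Import reals.
From mathcomp Require Import mpoly.
From Stdlib Require Import ClassicalEpsilon.

Set Implicit Arguments.
Unset Strict Implicit.
Unset Printing Implicit Defensive.

Import GRing.Theory.
Local Open Scope ring_scope.

Definition pbool (P : Prop) : bool :=
  if excluded_middle_informative P then true else false.

Section Dims.
Variable F : fieldType.

Definition lin_indep (L : finType) (k : nat) (v : 'I_k -> L -> F) : Prop :=
  forall c : 'I_k -> F,
    (forall l : L, \sum_(j < k) c j * v j l = 0) -> forall j, c j = 0.

Definition ldim (L : finType) (X : (L -> F) -> Prop) : nat :=
  \max_(k < #|L|.+1 |
        pbool (exists v : 'I_k -> L -> F, (forall j, X (v j)) /\ lin_indep v)) k.

(* Algebraic (Krull) dimension of (the Zariski closure of) a subset X of the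
   affine space F^K: the largest size of a set J of coordinates whose
   coordinate functions are algebraically independent on X, i.e. no nonzero
   polynomial in the variables indexed by J vanishes on X. *)
Definition coord_pt (K : finType) (x : K -> F) : 'I_#|K| -> F :=
  fun i => x (enum_val i).

Definition vars_in (K : finType) (J : {set K}) (p : {mpoly F[#|K|]}) : Prop :=
  forall m, m \in msupp p -> forall i : 'I_#|K|, (m i != 0)%N -> enum_val i \in J.

Definition alg_indep_on (K : finType) (X : (K -> F) -> Prop) (J : {set K}) : Prop :=
  forall p : {mpoly F[#|K|]}, vars_in J p ->
    (forall x, X x -> p.@[coord_pt x] = 0) -> p = 0.

Definition adim (K : finType) (X : (K -> F) -> Prop) : nat :=
  \max_(k < #|K|.+1 |
        pbool (exists J : {set K}, #|J| = k /\ alg_indep_on X J)) k.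

End Dims.

Section QuiverFlag.
Variable F : fieldType.
Variables (I Om : finType) (src tgt : Om -> I).
(* dimension vector alpha; V_i = F^(alpha i) (row vectors, maps act on the
   right: v |-> v *m f) *)
Variable alpha : I -> nat.
(* the flag F^0 ⊂ ... ⊂ F^s of I-graded subspaces, given by its graded
   pieces F^k_i = F^k ∩ V_i, each as the row space of a square matrix *)
Variable s : nat.
Variable Fl : nat -> forall i : I, 'M[F]_(alpha i).

Definition is_graded_flag : Prop :=
  [/\ forall i, Fl 0 i = 0,
      forall i, ((1%:M : 'M[F]_(alpha i)) <= Fl s i)%MS &
      forall k i, (k < s)%N -> (Fl k i <= Fl k.+1 i)%MS].

Definition hom_compat (i j : I) (f : 'M[F]_(alpha i, alpha j)) : Prop :=
  forall k, (k <= s)%N -> (Fl k i *m f <= Fl k j)%MS.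

Definition end_compat (g : forall i, 'M[F]_(alpha i)) : Prop :=
  forall i k, (k <= s)%N -> (Fl k i *m g i <= Fl k i)%MS.

(* arrows of Q_n : n_h copies of each arrow h *)
Definition arrn (n : Om -> nat) := {h : Om & 'I_(n h)}.
Definition asrc (n : Om -> nat) (a : arrn n) : I := src (tag a).
Definition atgt (n : Om -> nat) (a : arrn n) : I := tgt (tag a).

Definition rep (n : Om -> nat) :=
  forall a : arrn n, 'M[F]_(alpha (asrc a), alpha (atgt a)).

Definition rep_compat (n : Om -> nat) (x : rep n) : Prop :=
  forall a : arrn n, hom_compat (x a).

(* W_n(g): g_j x_a = x_a g_i for a : i -> j; with maps acting on the right
   this reads  x_a *m g_j = g_i *m x_a *)
Definition Wn (n : Om -> nat) (g : forall i, 'M[F]_(alpha i)) (x : rep n) : Prop :=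
  rep_compat x /\ forall a : arrn n, x a *m g (atgt a) = g (asrc a) *m x a.

Definition rep_coord_index (n : Om -> nat) :=
  {a : arrn n & ('I_(alpha (asrc a)) * 'I_(alpha (atgt a)))%type}.

Definition rep_coord (n : Om -> nat) (x : rep n) : rep_coord_index n -> F :=
  fun l => x (tag l) (tagged l).1 (tagged l).2.

Definition rep_subset_dim (n : Om -> nat) (P : rep n -> Prop) : nat :=
  ldim (fun c : rep_coord_index n -> F => exists x, P x /\ c = rep_coord x).

Definition dim_rep (n : Om -> nat) : nat := rep_subset_dim (@rep_compat n).
Definition dim_W (n : Om -> nat) (g : forall i, 'M[F]_(alpha i)) : nat :=
  rep_subset_dim (@Wn n g).

Definition end_coord_index := {i : I & ('I_(alpha i) * 'I_(alpha i))%type}.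

Definition end_coord (g : forall i, 'M[F]_(alpha i)) : end_coord_index -> F :=
  fun l => g (tag l) (tagged l).1 (tagged l).2.

Definition S_rn (r : nat) (n : Om -> nat) (g : forall i, 'M[F]_(alpha i)) : Prop :=
  end_compat g /\ (dim_rep n - r <= dim_W n g)%N.

Definition s_rn (r : nat) (n : Om -> nat) : nat :=
  adim (fun c : end_coord_index -> F => exists g, S_rn r n g /\ c = end_coord g).

End QuiverFlag.

(* Main.v *)
Require Import Defs.
From HB Require Import structures.
From mathcomp Require Import all_boot all_order all_algebra.
From mathcomp Require Import complex reals zify.
From Stdlib Require Import Classical ClassicalEpsilon FunctionalExtensionality PropExtensionality.
Set Implicit Arguments. Unset Strict Implicit. Unset Printing Implicit Defensive.
Import GRing.Theory Num.Theory.
Local Open Scope ring_scope.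

Lemma pboolP (P : Prop) : pbool P = true <-> P.
Proof. rewrite /pbool; case: excluded_middle_informative => //. Qed.

Section LD.
Variables (F : fieldType) (L : finType).

Lemma indep_le k (v : 'I_k -> L -> F) : lin_indep v -> (k <= #|L|)%N.
Proof.
move=> Hv.
pose M : 'M[F]_(k, #|L|) := \matrix_(i, l) v i (enum_val l).
have Hr : \rank M = k.
  apply/eqP; rewrite eqn_leq rank_leq_row /=.
  rewrite leqNgt; apply/negP => Hlt.
  have Hk : \rank (kermx M) != 0%N by rewrite mxrank_ker subn_eq0 -ltnNge.
  rewrite mxrank_eq0 in Hk.
  have [i Hi] : exists i, row i (kermx M) != 0.
    apply/existsP; apply: contraR Hk => /existsPn H.
    by apply/eqP/row_matrixP => i; rewrite row0; apply/eqP; move/negPn: (H i).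
  have HK : row i (kermx M) *m M = 0 by rewrite -row_mul mulmx_ker row0.
  move/eqP: Hi; apply; apply/rowP => j; rewrite [RHS]mxE.
  have -> : row i (kermx M) 0 j = (fun j => row i (kermx M) 0 j) j by [].
  apply: Hv => l.
  apply: etrans (_ : _ = (row i (kermx M) *m M) 0 (enum_rank l)) _; last by rewrite HK mxE.
  rewrite mxE; apply: eq_bigr => j' _; congr (_ * _); rewrite /M mxE; exact: (congr1 (v j') (esym (enum_rankK l))).
by rewrite -Hr rank_leq_col.
Qed.

Lemma ldim_ge (X : (L -> F) -> Prop) k (v : 'I_k -> L -> F) :
  (forall j, X (v j)) -> lin_indep v -> (k <= ldim X)%N.
Proof.
move=> HX Hv; have Hk : (k < #|L|.+1)%N by rewrite ltnS; exact: indep_le Hv.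
rewrite /ldim.
apply: (leq_trans _ (leq_bigmax_cond (F := fun i : 'I_#|L|.+1 => nat_of_ord i) (Ordinal Hk) _)) => //.
by apply/pboolP; exists v.
Qed.

Lemma ldim_wit (X : (L -> F) -> Prop) :
  exists v : 'I_(ldim X) -> L -> F, (forall j, X (v j)) /\ lin_indep v.
Proof.
pose A := [pred k : 'I_#|L|.+1 | pbool (exists v : 'I_k -> L -> F, (forall j, X (v j)) /\ lin_indep v)].
have H0 : (0 < #|A|)%N.
  apply/card_gt0P; exists ord0; rewrite inE; apply/pboolP.
  by exists (fun _ _ => 0); split; [case|move=> ? ?; case].
case: (eq_bigmax_cond (fun i : 'I_#|L|.+1 => nat_of_ord i) H0) => i0.
rewrite inE => /pboolP Hi E.
have -> : ldim X = i0 by rewrite -E.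
exact: Hi.
Qed.

Lemma ldim_ext (X Y : (L -> F) -> Prop) : (forall c, X c <-> Y c) -> ldim X = ldim Y.
Proof.
move=> H; have -> : X = Y by apply: functional_extensionality => c; apply: propositional_extensionality.
done.
Qed.

End LD.

Section Q.
Variables (F : fieldType) (I Om : finType) (src tgt : Om -> I) (alpha : I -> nat).
Variables (s : nat) (Fl : nat -> forall i : I, 'M[F]_(alpha i)).

Lemma gap n (hn : forall h, (0 < n h)%N) (g : forall i, 'M[F]_(alpha i)) :
  (dim_W src tgt s Fl n g < dim_rep src tgt s Fl n)%N ->
  exists h, (dim_W src tgt s Fl n g + n h <= dim_rep src tgt s Fl n)%N.
Proof.
move=> Hlt.
have [x [Hx [a Ha]]] : exists x : rep F src tgt alpha n, rep_compat s Fl x /\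
    exists a, x a *m g (atgt tgt a) <> g (asrc src a) *m x a.
  apply: NNPP => Hn; move: Hlt; rewrite /dim_W /dim_rep /rep_subset_dim.
  rewrite (@ldim_ext _ _ _ (fun c => exists x, rep_compat s Fl x /\ c = rep_coord x)) ?ltnn // => c.
  split; case=> y [Hy ->]; exists y; split => //; first exact: Hy.1.
  split => // b; apply: NNPP => Hb; apply: Hn; exists y; split => //; exists b; exact Hb.
case: a Ha => h j0 Ha.
have [p [q Hpq]] : exists p q, (x (existT _ h j0) *m g (tgt h)) p q <> (g (src h) *m x (existT _ h j0)) p q.
  apply: NNPP => H; apply: Ha; apply/matrixP => p q; apply: NNPP => H'; apply: H; exists p, q; exact H'.
pose a_ (j : 'I_(n h)) : arrn n := existT (fun h => 'I_(n h)) h j.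
pose ix (j : 'I_(n h)) (u : 'I_(alpha (src h))) (v : 'I_(alpha (tgt h))) : rep_coord_index src tgt alpha n :=
  existT (fun a : arrn n => ('I_(alpha (asrc src a)) * 'I_(alpha (atgt tgt a)))%type) (a_ j) (u, v).
pose Phi (j : 'I_(n h)) (c : rep_coord_index src tgt alpha n -> F) :=
  \sum_(t < alpha (tgt h)) c (ix j p t) * g (tgt h) t q - \sum_(t < alpha (src h)) g (src h) p t * c (ix j t q).
pose Phi' (M : 'M[F]_(alpha (src h), alpha (tgt h))) := (M *m g (tgt h)) p q - (g (src h) *m M) p q.
have PhiE : forall j (y : rep F src tgt alpha n), Phi j (rep_coord y) = Phi' (y (a_ j)).
  by move=> j y; rewrite /Phi /Phi' !mxE.
have PhiL : forall K (c : 'I_K -> F) (u : 'I_K -> rep_coord_index src tgt alpha n -> F),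
    (forall l, \sum_i c i * u i l = 0) -> forall j, \sum_i c i * Phi j (u i) = 0.
  move=> K c u H j; rewrite /Phi.
  under eq_bigr do rewrite mulrBr !mulr_sumr.
  rewrite sumrB exchange_big [X in _ - X]exchange_big /=.
  rewrite big1 ?[X in _ - X]big1 ?subr0 // => t _.
    rewrite (eq_bigr (fun i => g (src h) p t * (c i * u i (ix j t q)))) => [|i _]; last by rewrite mulrCA.
    by rewrite -mulr_sumr H mulr0.
  rewrite (eq_bigr (fun i => c i * u i (ix j p t) * g (tgt h) t q)) => [|i _]; last by rewrite mulrA.
  by rewrite -mulr_suml H mul0r.
pose z (b : arrn n) : 'M[F]_(alpha (asrc src b), alpha (atgt tgt b)) :=
  x (existT (fun h => 'I_(n h)) (tag b) (insubd (Ordinal (hn (tag b))) (nat_of_ord j0))).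
have hz : forall j, z (a_ j) = x (existT _ h j0).
  move=> j; rewrite /z /=.
  have -> : insubd (Ordinal (hn h)) (nat_of_ord j0) = j0 by apply/val_inj; rewrite val_insubd ltn_ord.
  by [].
pose y (j : 'I_(n h)) : rep F src tgt alpha n := fun b => if b == a_ j then z b else 0.
have Hy : forall j, rep_compat s Fl (y j).
  move=> j b k hk; rewrite /y; case: ifP => _; first exact: (Hx (existT _ (tag b) _) k hk).
  by rewrite mulmx0 sub0mx.
pose D := Phi' (x (existT _ h j0)).
have HD : D != 0 by rewrite /D /Phi' subr_eq0; apply/eqP.
have PhiY : forall j j', Phi j (rep_coord (y j')) = if j' == j then D else 0.
  move=> j j'; rewrite PhiE /y.
  case: (eqVneq j' j) => [->|ne]; first by rewrite eqxx hz.
  have -> : (a_ j == a_ j') = false.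
    apply/negbTE; apply: contra ne => /eqP E.
    have := congr1 (tagged_as (a_ j)) E; rewrite !tagged_asE => ->; by [].
  by rewrite /Phi' mul0mx mulmx0 subrr.
have [w [Hw Hwi]] := ldim_wit (fun c : rep_coord_index src tgt alpha n -> F => exists x, Wn s Fl g x /\ c = rep_coord x).
exists h; rewrite /dim_W /dim_rep /rep_subset_dim.
set d := ldim _ in w Hw Hwi *.
pose u (i : 'I_(d + n h)) := match split i with inl k => w k | inr j => rep_coord (y j) end.
have uL : forall k, u (lshift (n h) k) = w k by move=> k; rewrite /u (unsplitK (inl k)).
have uR : forall j, u (rshift d j) = rep_coord (y j) by move=> j; rewrite /u (unsplitK (inr j)).
apply: (ldim_ge (v := u)).
  move=> i; rewrite /u; case: splitP => [k _|j _].
    by have [x' [Hx' ->]] := Hw k; exists x'; split => //; exact: Hx'.1.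
  by exists (y j); split => //; exact: Hy.
move=> c Hc.
have cR : forall j, c (rshift d j) = 0.
  move=> j; have := PhiL _ c u Hc j; rewrite big_split_ord /=.
  rewrite big1 ?add0r => [|k _]; last first.
    rewrite uL; have [x' [Hx' ->]] := Hw k.
    rewrite PhiE /Phi'; have E := congr1 (fun M : 'M[F]_(alpha (src h), alpha (tgt h)) => M p q) (Hx'.2 (a_ j)).
    by apply/eqP; rewrite mulf_eq0 subr_eq0; apply/orP; right; apply/eqP; exact: E.
  rewrite (bigD1 j) //= big1 ?addr0 => [|j' /negbTE Hj]; last by rewrite uR PhiY Hj mulr0.
  by rewrite uR PhiY eqxx => /eqP; rewrite mulf_eq0 (negbTE HD) orbF => /eqP.
have cL : forall k, c (lshift (n h) k) = 0.
  apply: (Hwi (fun k => c (lshift (n h) k))) => l.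
  have := Hc l; rewrite big_split_ord /= [X in _ + X]big1 ?addr0 => [|j _]; last by rewrite cR mul0r.
  by under eq_bigr do rewrite uL.
move=> i; rewrite -(splitK i); case: (split i) => [k|j] /=; [exact: cL | exact: cR].
Qed.
End Q.

Lemma adim_le (F : fieldType) (K : finType) (X : (K -> F) -> Prop) : (adim X <= #|K|)%N.
Proof. by apply/bigmax_leqP => i _; rewrite -ltnS ltn_ord. Qed.

Lemma S_rn_eq (F : fieldType) (I Om : finType) (src tgt : Om -> I) (alpha : I -> nat)
  (s : nat) (Fl : nat -> forall i : I, 'M[F]_(alpha i)) r n :
  (forall h, (r < n h)%N) -> s_rn src tgt s Fl r n = s_rn src tgt s Fl 0 n.
Proof.
move=> hn; rewrite /s_rn; f_equal; apply: functional_extensionality => c.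
apply: propositional_extensionality; split; case=> g [[Hg Hd] ->]; exists g; split=> //; split=> //.
  rewrite subn0 leqNgt; apply/negP => Hlt.
  have [h Hh] := gap (fun h => leq_ltn_trans (leq0n r) (hn h)) Hlt.
  have := hn h; move: Hd Hh; lia.
by apply: leq_trans (leq_subr r _) _; rewrite subn0 in Hd.
Qed.

Theorem lemma4p3 (R : realType) (I Om : finType) (src tgt : Om -> I)
    (alpha : I -> nat) (s : nat) (Fl : nat -> forall i : I, 'M[R[i]]_(alpha i)) :
  @is_graded_flag _ I alpha s Fl ->
  exists n0 : Om -> int,
    forall n : Om -> nat,
      (forall h, (1 <= n h)%N) ->
      (forall h, n0 h <= (n h)%:Z) ->
      let s_ r := (@s_rn _ I Om src tgt alpha s Fl r n)%:Z in
      (exists r : nat, s_ r - r%:Z = s_ 0%N) /\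
      (forall r : nat, s_ r - r%:Z <= s_ 0%N).
Proof.
move=> _; exists (fun _ => (#|{: {i : I & ('I_(alpha i) * 'I_(alpha i))%type}}|.+1)%:Z) => n hn1 hn0 s_.
split; first by exists 0%N; rewrite subr0.
move=> r; rewrite /s_.
case: (leqP r #|{: {i : I & ('I_(alpha i) * 'I_(alpha i))%type}}|) => Hr.
  rewrite S_rn_eq; first by rewrite gerBl.
  move=> h; have := hn0 h; rewrite lez_nat; exact: leq_ltn_trans Hr.
have := adim_le (fun c : end_coord_index alpha -> R[i] => exists g, S_rn src tgt s Fl r n g /\ c = end_coord g).
rewrite -/(s_rn src tgt s Fl r n) => Hb; rewrite lerBlDr -PoszD lez_nat.
apply: leq_trans Hb _; apply: leq_trans (ltnW Hr) _; exact: leq_addl.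
Qed.
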